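(* Let $N\ge1$, consider the fuzzy sphere calculus described in the context with basis one-forms $e_k=1\otimes\sigma_k$ and basis two-forms $f_m=\tfrac12\sum_{j,k}\epsilon_{mjk}\,e_j\wedge e_k$, and let $\nabla$ be the connection with $\nabla(e_k)=\sum_je_j\otimes_{A_N}\omega_{jk}$, $\omega_{jk}=-\tfrac12\sum_l\epsilon_{jkl}e_l$. Define its curvature on the basis by $$R_\nabla(e_j)=\sum_k\Big[(\mathrm{id}\otimes\wedge)\big(\nabla(e_k)\otimes_{A_N}\omega_{kj}\big)+e_k\otimes_{A_N}d\omega_{kj}\Big]\in\mathcal{E}\otimes_{A_N}\Omega^2(A_N).$$ Then $$R_\nabla(e_j)=-\tfrac14\sum_{p,q}\epsilon_{jpq}\,e_p\otimes_{A_N}f_q=\tfrac14\sum_pe_p\otimes_{A_N}(e_p\wedge e_j).$$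
   Context: Fuzzy sphere spectral triple: $J_1,J_2,J_3$ basis of $su(2)$ with $[J_k,J_l]=\sum_m\epsilon_{klm}J_m$ ($\epsilon_{123}=1$, totally antisymmetric); $\rho_{n/2}$ the $(n+1)$-dimensional irreducible unitary representation; $K_N=\oplus_{n=0}^N\mathbb{C}^{n+1}$, $X_k=\oplus_{n=0}^N\rho_{n/2}(J_k)$, $A_N=B(K_N)$, $H_N=K_N\otimes\mathbb{C}^2$ with $a\mapsto a\otimes1$, $\sigma_k=\sqrt{-1}\tau_k$ ($\tau_k$ Pauli matrices), $D_N=\sum_kX_k\otimes\sigma_k$. Differential calculus: $\mathcal{E}=\Omega^1(A_N)=\{\sum a_j[D_N,b_j]\}$ (free with basis $e_1,e_2,e_3$), $da=[D_N,a]$; $\Omega^2(A_N)=\mathcal{S}/J^2$ with $\mathcal{S}$ the span of $a_0[D_N,a_1][D_N,a_2]$ and $J^2=\{\sum_j[D_N,a_j][D_N,b_j]:\sum_ja_j[D_N,b_j]=0\}$; $\wedge$ is operator multiplication followed by the quotient; $d(\sum a_j[D_N,b_j])=[\sum_j[D_N,a_j][D_N,b_j]]$. $(\mathrm{id}\otimes\wedge)(x\otimes y\otimes z)=x\otimes(y\wedge z)$. (This $\nabla$ is the Levi-Civita connection of the metric $g(e_k\otimes e_j)=\delta_{kj}$.) *)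

(* Defs.v *)
From HB Require Import structures.
From mathcomp Require Import all_boot all_order all_algebra all_field.
From mathcomp Require Import mxtens.
From Stdlib Require Import ClassicalEpsilon.
Set Implicit Arguments. Unset Strict Implicit. Unset Printing Implicit Defensive.
Import Order.TTheory GRing.Theory Num.Theory.
Local Open Scope ring_scope.

Notation C := algC.

(* Levi-Civita symbol on indices 'I_3 (0,1,2 standing for 1,2,3). *)
Definition eps (i j k : 'I_3) : C :=
  if [&& i != j, j != k & i != k] then
    (if val j == ((val i).+1 %% 3)%N then 1 else -1)
  else 0.

(* Spin-n/2 representation rho_{n/2} of su(2) on C^(n+1), basis |m>,
   m = n/2 - a (a = 0..n).  S_+ |m> = sqrt((j-m)(j+m+1)) |m+1>,
   so (S_+)_{a-1,a} = sqrt(a (n+1-a)).  J_k = -i S_k, hence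
   [J_1,J_2] = J_3 (cyclically). *)
Definition Splus (n : nat) : 'M[C]_n.+1 :=
  \matrix_(r, c) (if (val r).+1 == val c
                  then sqrtC ((val c * (n.+1 - val c))%N)%:R else 0).
Definition Sminus (n : nat) : 'M[C]_n.+1 := (Splus n)^T.
Definition Sz (n : nat) : 'M[C]_n.+1 :=
  \matrix_(r, c) (if r == c then (n%:R / 2 - (val r)%:R) else 0).

Definition rho (n : nat) (k : 'I_3) : 'M[C]_n.+1 :=
  match val k with
  | 0%N => (- 'i / 2) *: (Splus n + Sminus n)
  | 1%N => (- 1 / 2) *: (Splus n - Sminus n)
  | _ => (- 'i) *: Sz n
  end.

Definition Kdim (N : nat) : nat := (\sum_(n < N.+1) (n : nat).+1)%N.
Definition X (N : nat) (k : 'I_3) : 'M[C]_(Kdim N) :=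
  mxdiag (fun n : 'I_N.+1 => rho n k).

Definition tau (k : 'I_3) : 'M[C]_2 :=
  match val k with
  | 0%N => \matrix_(r, c) (if r == c then 0 else 1)
  | 1%N => \matrix_(r, c) (if r == c then 0 else if val r == 0%N then - 'i else 'i)
  | _ => \matrix_(r, c) (if r == c then (if val r == 0%N then 1 else -1) else 0)
  end.
Definition sigma (k : 'I_3) : 'M[C]_2 := 'i *: tau k.

Definition Hdim (N : nat) : nat := (Kdim N * 2)%N.
Notation op N := 'M[C]_(Hdim N).

(* representation a |-> a (x) 1 of A_N = B(K_N) *)
Definition emb (N : nat) (a : 'M[C]_(Kdim N)) : op N := a *t (1%:M : 'M[C]_2).

Definition Dirac (N : nat) : op N := \sum_(k < 3) (X N k *t sigma k).

Definition comm (N : nat) (x : op N) : op N := Dirac N *m x - x *m Dirac N.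

Notation Apair N := ('M[C]_(Kdim N) * 'M[C]_(Kdim N))%type.

Definition rep1 (N : nat) (s : seq (Apair N)) : op N :=
  \sum_(p <- s) (emb p.1 *m comm (emb p.2)).
Definition drep (N : nat) (s : seq (Apair N)) : op N :=
  \sum_(p <- s) (comm (emb p.1) *m comm (emb p.2)).

Definition Omega1 (N : nat) (w : op N) : Prop := exists s, w = rep1 s.

(* the space S spanned by a0 [D,a1][D,a2] (scalars absorbed into a0) *)
Definition Sspace (N : nat) (x : op N) : Prop :=
  exists s : seq ('M[C]_(Kdim N) * Apair N),
    x = \sum_(p <- s) (emb p.1 *m comm (emb p.2.1) *m comm (emb p.2.2)).

Definition J2 (N : nat) (x : op N) : Prop :=
  exists s, rep1 s = 0 /\ x = drep s.

(* equality in Omega^2(A_N) = S / J^2 of two representatives in S *)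
Definition eq2 (N : nat) (x y : op N) : Prop :=
  Sspace x /\ Sspace y /\ J2 (x - y).

(* exterior derivative d : Omega^1 -> Omega^2, on a (chosen) representation
   w = sum_j a_j [D,b_j]; well defined modulo J^2. *)
Definition d1 (N : nat) (w : op N) : op N :=
  drep (epsilon (inhabits [::]) (fun s => w = rep1 s)).

(* wedge product: operator multiplication (followed by the quotient) *)
Definition wedge (N : nat) (x y : op N) : op N := x *m y.

Definition e (N : nat) (k : 'I_3) : op N := (1%:M : 'M[C]_(Kdim N)) *t sigma k.

Definition f (N : nat) (m : 'I_3) : op N :=
  (1 / 2) *: \sum_(j < 3) \sum_(k < 3) (eps m j k *: wedge (e N j) (e N k)).

Definition omega (N : nat) (j k : 'I_3) : op N :=
  (- 1 / 2) *: \sum_(l < 3) (eps j k l *: e N l).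

(* Elements of E (x)_{A_N} F, E free with central basis e_1,e_2,e_3, are
   written uniquely as sum_i e_i (x) y_i; we represent them by their
   coefficient families i |-> y_i. *)

(* nabla(e_k) = sum_j e_j (x) omega_{jk}: coefficient of e_i *)
Definition nabla (N : nat) (k : 'I_3) (i : 'I_3) : op N := omega N i k.

(* R(e_j) = sum_k [ (id (x) wedge)(nabla(e_k) (x) omega_{kj}) + e_k (x) d omega_{kj} ],
   coefficient of e_i. *)
Definition curv (N : nat) (j : 'I_3) (i : 'I_3) : op N :=
  \sum_(k < 3) (wedge (nabla N k i) (omega N k j)
                + (if k == i then d1 (omega N k j) else 0)).

(* Main.v *)
Require Import Defs.
From HB Require Import structures.
From mathcomp Require Import all_boot all_order all_algebra all_field ring.
From mathcomp Require Import mxtens zify.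
From Stdlib Require Import ClassicalEpsilon.
Set Implicit Arguments. Unset Strict Implicit. Unset Printing Implicit Defensive.
Import Order.TTheory GRing.Theory Num.Theory.
Local Open Scope ring_scope.


Section Tens.
Variables m n p q : nat.
Implicit Types (A B : 'M[C]_(m,n)) (M : 'M[C]_(p,q)).
Lemma tensDl A B M : (A + B) *t M = A *t M + B *t M.
Proof. by apply/matrixP=> i j; rewrite !mxE mulrDl. Qed.
Lemma tensDr A M (M2 : 'M[C]_(p,q)) : A *t (M + M2) = A *t M + A *t M2.
Proof. by apply/matrixP=> i j; rewrite !mxE mulrDr. Qed.
Lemma tensZl c A M : (c *: A) *t M = c *: (A *t M).
Proof. by apply/matrixP=> i j; rewrite !mxE mulrA. Qed.
Lemma tensZr c A M : A *t (c *: M) = c *: (A *t M).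
Proof. by apply/matrixP=> i j; rewrite !mxE mulrCA. Qed.
Lemma tensNl A M : (- A) *t M = - (A *t M).
Proof. by rewrite -scaleN1r tensZl scaleN1r. Qed.
Lemma tensNr A M : A *t (- M) = - (A *t M).
Proof. by rewrite -scaleN1r tensZr scaleN1r. Qed.
Lemma tensBl A B M : (A - B) *t M = A *t M - B *t M.
Proof. by rewrite tensDl tensNl. Qed.
Lemma tensBr A M (M2 : 'M[C]_(p,q)) : A *t (M - M2) = A *t M - A *t M2.
Proof. by rewrite tensDr tensNr. Qed.
Lemma tens_suml I (r : seq I) (P : pred I) (F : I -> 'M[C]_(m,n)) M :
  (\sum_(i <- r | P i) F i) *t M = \sum_(i <- r | P i) (F i *t M).
Proof. by elim/big_rec2: _ => [|i x y _ <-]; rewrite ?tens0mx ?tensDl. Qed.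
Lemma tens_sumr I (r : seq I) (P : pred I) (F : I -> 'M[C]_(p,q)) A :
  A *t (\sum_(i <- r | P i) F i) = \sum_(i <- r | P i) (A *t F i).
Proof. by elim/big_rec2: _ => [|i x y _ <-]; rewrite ?tensmx0 ?tensDr. Qed.
End Tens.

Lemma tens11 (m n : nat) : (1%:M : 'M[C]_m) *t (1%:M : 'M[C]_n) = 1%:M.
Proof.
apply/matrixP=> i j.
case: (mxtens_indexP i)=> i0 i1; case: (mxtens_indexP j)=> j0 j1.
rewrite tensmxE !mxE (can_eq (@mxtens_indexK m n)) xpair_eqE.
by case: (i0 == j0); case: (i1 == j1); rewrite ?mulr1 ?mulr0.
Qed.

Section Emb.
Variable N : nat.
Implicit Types a b c : 'M[C]_(Kdim N).
Lemma embM a b : emb (a *m b) = emb a *m emb b.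
Proof. by rewrite /emb tensmx_mul mulmx1. Qed.
Lemma embD a b : emb (a + b) = emb a + emb b.
Proof. by rewrite /emb tensDl. Qed.
Lemma embN a : emb (- a) = - emb a.
Proof. by rewrite /emb tensNl. Qed.
Lemma embB a b : emb (a - b) = emb a - emb b.
Proof. by rewrite /emb tensBl. Qed.
Lemma embZ (k : C) a : emb (k *: a) = k *: emb a.
Proof. by rewrite /emb tensZl. Qed.
Lemma emb0 : emb (0 : 'M[C]_(Kdim N)) = 0.
Proof. by rewrite /emb tens0mx. Qed.
Lemma emb1 : emb (1%:M : 'M[C]_(Kdim N)) = 1%:M.
Proof. by rewrite /emb tens11. Qed.
Lemma emb_sum I (r : seq I) (P : pred I) (F : I -> 'M[C]_(Kdim N)) :
  emb (\sum_(i <- r | P i) F i) = \sum_(i <- r | P i) emb (F i).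
Proof. by rewrite /emb tens_suml. Qed.

Lemma commD (x y : op N) : comm (x + y) = comm x + comm y.
Proof. by rewrite /comm mulmxDr mulmxDl opprD addrACA. Qed.
Lemma commN (x : op N) : comm (- x) = - comm x.
Proof. by rewrite /comm mulmxN mulNmx opprB opprK addrC. Qed.
Lemma comm0 : comm (0 : op N) = 0.
Proof. by rewrite /comm mulmx0 mul0mx subrr. Qed.
Lemma commM (x y : op N) : comm (x *m y) = comm x *m y + x *m comm y.
Proof.
rewrite /comm mulmxBl mulmxBr !mulmxA addrA subrK //.
Qed.
Lemma comm_sum I (r : seq I) (P : pred I) (F : I -> op N) :
  comm (\sum_(i <- r | P i) F i) = \sum_(i <- r | P i) comm (F i).
Proof. by elim/big_rec2: _ => [|i x y _ <-]; rewrite ?comm0 ?commD. Qed.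
End Emb.


Section Preds.
Variable N : nat.
Implicit Types (s : seq (Apair N)) (x y : op N) (a b c d : 'M[C]_(Kdim N)).

Lemma rep1_cat s1 s2 : rep1 (s1 ++ s2) = rep1 s1 + rep1 s2.
Proof. by rewrite /rep1 big_cat. Qed.
Lemma drep_cat s1 s2 : drep (s1 ++ s2) = drep s1 + drep s2.
Proof. by rewrite /drep big_cat. Qed.

Definition lmap c s := [seq (c *m p.1, p.2) | p <- s].
Lemma rep1_lmap c s : rep1 (lmap c s) = emb c *m rep1 s.
Proof.
rewrite /rep1 big_map mulmx_sumr; apply: eq_bigr => p _.
by rewrite embM mulmxA.
Qed.
Lemma drep_lmap c s : drep (lmap c s) = comm (emb c) *m rep1 s + emb c *m drep s.
Proof.
rewrite /drep /rep1 big_map !mulmx_sumr -big_split; apply: eq_bigr => p _ /=.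
by rewrite embM commM mulmxDl !mulmxA.
Qed.

Definition rmap s d := [seq (p.1, p.2 *m d) | p <- s] ++
   [:: (- \sum_(p <- s) (p.1 *m p.2), d)].
Lemma rep1_rmap s d : rep1 (rmap s d) = rep1 s *m emb d.
Proof.
rewrite rep1_cat /rep1 big_map big_cons big_nil addr0 /= embN emb_sum.
rewrite mulNmx mulmx_suml mulmx_suml -sumrB; apply: eq_bigr => p _.
by rewrite embM commM mulmxDr embM !mulmxA addrK.
Qed.
Lemma drep_rmap s d : drep (rmap s d) = drep s *m emb d - rep1 s *m comm (emb d).
Proof.
rewrite drep_cat /drep /rep1 big_map big_cons big_nil addr0 /= embN commN emb_sum comm_sum.
rewrite mulNmx !mulmx_suml -!sumrB; apply: eq_bigr => p _.
rewrite !embM !commM.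
set A := comm (emb p.1); set B := comm (emb p.2); set E := comm (emb d).
by rewrite (mulmxDr A) (mulmxDl _ _ E) !mulmxA opprD addrA addrK.
Qed.

Lemma J2_0 : J2 (0 : op N).
Proof. by exists [::]; rewrite /rep1 /drep !big_nil. Qed.
Lemma J2D x y : J2 x -> J2 y -> J2 (x + y).
Proof.
move=> [s1 [h1 ->]] [s2 [h2 ->]]; exists (s1 ++ s2).
by rewrite rep1_cat drep_cat h1 h2 addr0.
Qed.
Lemma J2_lmul c x : J2 x -> J2 (emb c *m x).
Proof.
move=> [s [h ->]]; exists (lmap c s).
by rewrite rep1_lmap drep_lmap h !mulmx0 add0r.
Qed.
Lemma J2_rmul x d : J2 x -> J2 (x *m emb d).
Proof.
move=> [s [h ->]]; exists (rmap s d).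
by rewrite rep1_rmap drep_rmap h !mul0mx subr0.
Qed.
Lemma J2Z (k : C) x : J2 x -> J2 (k *: x).
Proof.
move=> h; have := J2_lmul (k%:M) h.
by rewrite -scalemx1 embZ emb1 -scalemxAl mul1mx.
Qed.
Lemma J2N x : J2 x -> J2 (- x).
Proof. by move=> h; rewrite -scaleN1r; apply: J2Z. Qed.
Lemma J2B x y : J2 x -> J2 y -> J2 (x - y).
Proof. by move=> h1 h2; apply: J2D => //; apply: J2N. Qed.
Lemma J2_sum I (r : seq I) (P : pred I) (F : I -> op N) :
  (forall i, P i -> J2 (F i)) -> J2 (\sum_(i <- r | P i) F i).
Proof. by move=> h; elim/big_ind: _ => //; [exact: J2_0 | exact: J2D]. Qed.

Lemma O1_0 : Omega1 (0 : op N).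
Proof. by exists [::]; rewrite /rep1 big_nil. Qed.
Lemma O1D x y : Omega1 x -> Omega1 y -> Omega1 (x + y).
Proof. by move=> [s1 ->] [s2 ->]; exists (s1 ++ s2); rewrite rep1_cat. Qed.
Lemma O1_lmul c x : Omega1 x -> Omega1 (emb c *m x).
Proof. by move=> [s ->]; exists (lmap c s); rewrite rep1_lmap. Qed.
Lemma O1_rmul x d : Omega1 x -> Omega1 (x *m emb d).
Proof. by move=> [s ->]; exists (rmap s d); rewrite rep1_rmap. Qed.
Lemma O1Z (k : C) x : Omega1 x -> Omega1 (k *: x).
Proof.
move=> h; have := O1_lmul (k%:M) h.
by rewrite -scalemx1 embZ emb1 -scalemxAl mul1mx.
Qed.
Lemma O1_sum I (r : seq I) (P : pred I) (F : I -> op N) :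
  (forall i, P i -> Omega1 (F i)) -> Omega1 (\sum_(i <- r | P i) F i).
Proof. by move=> h; elim/big_ind: _ => //; [exact: O1_0 | exact: O1D]. Qed.

Lemma S_0 : Sspace (0 : op N).
Proof. by exists [::]; rewrite big_nil. Qed.
Lemma SD x y : Sspace x -> Sspace y -> Sspace (x + y).
Proof. by move=> [s1 ->] [s2 ->]; exists (s1 ++ s2); rewrite big_cat. Qed.
Lemma SZ (k : C) x : Sspace x -> Sspace (k *: x).
Proof.
move=> [s ->]; exists [seq (k *: p.1, p.2) | p <- s].
rewrite big_map scaler_sumr; apply: eq_bigr => p _.
by rewrite embZ -!scalemxAl.
Qed.
Lemma SN x : Sspace x -> Sspace (- x).
Proof. by move=> h; rewrite -scaleN1r; apply: SZ. Qed.
Lemma SB x y : Sspace x -> Sspace y -> Sspace (x - y).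
Proof. by move=> h1 h2; apply: SD => //; apply: SN. Qed.
Lemma S_drep s : Sspace (drep s).
Proof.
exists [seq (1%:M, p) | p <- s]; rewrite big_map /drep; apply: eq_bigr => p _ /=.
by rewrite emb1 mul1mx; case: p.
Qed.
Lemma S_J2 x : J2 x -> Sspace x.
Proof. by move=> [s [_ ->]]; apply: S_drep. Qed.
Lemma S_sum I (r : seq I) (P : pred I) (F : I -> op N) :
  (forall i, P i -> Sspace (F i)) -> Sspace (\sum_(i <- r | P i) F i).
Proof. by move=> h; elim/big_ind: _ => //; [exact: S_0 | exact: SD]. Qed.

Lemma d1_spec x : Omega1 x -> exists s, x = rep1 s /\ d1 x = drep s.
Proof.
move=> h; rewrite /d1.
have := epsilon_spec (inhabits [::]) (fun s => x = rep1 s) h.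
by move=> e; eexists; split; [exact: e | reflexivity].
Qed.
End Preds.


Lemma pair_formula N (Cq a b : 'M[C]_(Kdim N)) :
  Dirac N *m Dirac N = emb Cq - Dirac N ->
  comm (emb a) *m comm (emb b) =
  Dirac N *m (emb a *m comm (emb b)) + (emb a *m comm (emb b)) *m Dirac N
  + emb a *m comm (emb b) - emb (a *m (Cq *m b - b *m Cq)).
Proof.
move=> hD; rewrite embM embB !embM.
have -> : emb Cq = Dirac N *m Dirac N + Dirac N by rewrite hD subrK.
rewrite /comm; set d := Dirac N; set x := emb a; set y := emb b.
rewrite !(mulmxBl, mulmxBr, mulmxDl, mulmxDr, mulmxN, mulNmx) !mulmxA !opprD !opprK -!addrA.
congr (_ + _); congr (_ + _).
set u := x *m y *m d *m d; set v := x *m d *m y; set w := x *m y *m d; set z := x *m d *m d *m y.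
rewrite addrC; congr (_ + _).
rewrite (addrCA (-z)) (addrCA v) addNKr (addrCA (-z)) (addrCA (-w)) addKr.
by rewrite addrCA addNr addr0.
Qed.

Lemma drep_formula N (Cq : 'M[C]_(Kdim N)) (s : seq (Apair N)) :
  Dirac N *m Dirac N = emb Cq - Dirac N ->
  drep s = Dirac N *m rep1 s + rep1 s *m Dirac N + rep1 s
     - emb (\sum_(p <- s) p.1 *m (Cq *m p.2 - p.2 *m Cq)).
Proof.
move=> hD; rewrite /drep /rep1 mulmx_sumr mulmx_suml emb_sum -!big_split -sumrB /=.
by apply: eq_bigr => p _; apply: pair_formula.
Qed.

Lemma i2 : 'i * 'i = -1 :> C. Proof. by rewrite -expr2 sqrCi. Qed.


Ltac crunch2 := apply/matrixP; case=> [[|[|//]] ?]; case=> [[|[|//]] ?];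
  rewrite ?(mxE, summxE, big_ord_recr, big_ord0) /= ?mxE /= /eps /=; ring: i2.

Lemma sig_mul (k l : 'I_3) : sigma k *m sigma l =
  - (k == l)%:R *: 1%:M - \sum_m eps k l m *: sigma m.
Proof.
case: k => [[|[|[|//]]] Hk]; case: l => [[|[|[|//]]] Hl]; crunch2.
Qed.


Lemma sum_single k (F : nat -> C) (a : nat) :
  \sum_(m < k) (if a == val m then F (val m) else 0) = if (a < k)%N then F a else 0.
Proof.
case: ltnP => ha.
  rewrite (bigD1 (Ordinal ha)) //= eqxx big1 ?addr0 // => m hm.
  case: eqP => // e; case/eqP: hm; apply: val_inj => /=; by rewrite e.
by rewrite big1 // => m _; case: eqP => // e; have := ltn_ord m; rewrite e in ha; move=> h; exfalso; rewrite /= in ha; lia.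
Qed.

Lemma SzE n : Sz n = diag_mx (\row_(r < n.+1) (n%:R / 2 - (val r)%:R)).
Proof. by apply/matrixP => r c; rewrite !mxE; case: (r == c); rewrite ?mulr1n ?mulr0n. Qed.

Lemma SzP n : Sz n *m Splus n - Splus n *m Sz n = Splus n.
Proof.
rewrite SzE mul_diag_mx mul_mx_diag; apply/matrixP => r c; rewrite !mxE.
case: eqP => h; last by rewrite !mulr0 !mul0r subr0.
rewrite -h mulrSr; ring.
Qed.

Lemma PM n : Splus n *m Sminus n - Sminus n *m Splus n = 2%:R *: Sz n.
Proof.
apply/matrixP => r c; rewrite !mxE.
pose s := fun m : nat => sqrtC (((m * (n.+1 - m))%N)%:R : C).
have e1 : \sum_j Splus n r j * Sminus n j c =
   \sum_(j < n.+1) (if (val r).+1 == val j then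
       (fun v => if (val c).+1 == v then s v ^+ 2 else 0) (val j) else 0).
  apply: eq_bigr => j _; rewrite !mxE /=.
  by rewrite /s; case: eqP => h1; case: eqP => h2; rewrite ?mulr0 ?mul0r ?expr2 // -h1 -h2.
have e2 : \sum_j Sminus n r j * Splus n j c =
   if val r is r'.+1 then
   \sum_(j < n.+1) (if r' == val j then
       (fun v => if (val c) == v.+1 then s v.+1 ^+ 2 else 0) (val j) else 0)
   else 0.
  clear e1; case: r => [[|r'] hr] /=.
    by rewrite big1 // => j _; rewrite !mxE /=; rewrite mul0r.
  apply: eq_bigr => j _; rewrite !mxE /= eqSS [r' == _]eq_sym.
  rewrite /s; case: eqP => h1; last by rewrite mul0r.
  rewrite h1; have [h2|h2] := eqVneq (nat_of_ord c) r'.+1.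
    by rewrite h2 ?expr2 ?mulr0.
  by rewrite ?mulr0.
rewrite e1 e2 (sum_single _ (fun v => if (val c).+1 == v then s v ^+ 2 else 0)).
clear e1 e2; rewrite -val_eqE /=.
case: r => [[|r'] hr] /=.
  rewrite subr0; case: c => [[|c'] hc] /=; last by case: ifP; rewrite mulr0.
  rewrite /s sqrtCK subr0; case: n {s hr hc} => [|n] /=.
    by rewrite mul0r mulr0.
  by rewrite mul1n subn1 /=; field.
rewrite (sum_single _ (fun v => if (val c) == v.+1 then s v.+1 ^+ 2 else 0)).
rewrite eqSS (_ : (r' < n.+1)%N = true); last by apply/idP; lia.
rewrite [_ == nat_of_ord c]eq_sym.
case: eqP => hc; last by case: ifP; rewrite subrr mulr0.
rewrite /s !sqrtCK; case: ltnP => h.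
  rewrite !natrM !natrB; [|lia|lia]. rewrite !mulrSr. by field.
have -> : n = r'.+1 by lia.
rewrite subSnn muln1 sub0r; by field.
Qed.


Section CM.
Variable n : nat.
Definition cm (U V : 'M[C]_n) := U *m V - V *m U.
Implicit Types U V W : 'M[C]_n.
Lemma cmDl U V W : cm (U + V) W = cm U W + cm V W.
Proof. by rewrite /cm mulmxDl mulmxDr opprD addrACA. Qed.
Lemma cmDr U V W : cm U (V + W) = cm U V + cm U W.
Proof. by rewrite /cm mulmxDl mulmxDr opprD addrACA. Qed.
Lemma cmNl U V : cm (- U) V = - cm U V.
Proof. by rewrite /cm mulmxN mulNmx opprB opprK addrC. Qed.
Lemma cmNr U V : cm U (- V) = - cm U V.
Proof. by rewrite /cm mulmxN mulNmx opprB opprK addrC. Qed.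
Lemma cmBl U V W : cm (U - V) W = cm U W - cm V W.
Proof. by rewrite cmDl cmNl. Qed.
Lemma cmBr U V W : cm U (V - W) = cm U V - cm U W.
Proof. by rewrite cmDr cmNr. Qed.
Lemma cmZl a U V : cm (a *: U) V = a *: cm U V.
Proof. by rewrite /cm scalerBr -scalemxAl -scalemxAr. Qed.
Lemma cmZr a U V : cm U (a *: V) = a *: cm U V.
Proof. by rewrite /cm scalerBr -scalemxAl -scalemxAr. Qed.
Lemma cm_anti U V : cm V U = - cm U V.
Proof. by rewrite /cm opprB. Qed.
Lemma cm_self U : cm U U = 0.
Proof. by rewrite /cm subrr. Qed.
End CM.

Lemma SzM n : cm (Sz n) (Sminus n) = - Sminus n.
Proof.
rewrite /cm SzE mul_diag_mx mul_mx_diag; apply/matrixP => r c; rewrite !mxE.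
case: eqP => h; last by rewrite !mulr0 !mul0r subr0 oppr0.
rewrite -h mulrSr; ring.
Qed.
Lemma SzP' n : cm (Sz n) (Splus n) = Splus n.
Proof. exact: SzP. Qed.
Lemma PM' n : cm (Splus n) (Sminus n) = 2%:R *: Sz n.
Proof. exact: PM. Qed.

Lemma rho_rel01 n : cm (rho n (@Ordinal 3 0 isT)) (rho n (@Ordinal 3 1 isT)) = rho n (@Ordinal 3 2 isT).
Proof.
rewrite /rho /= cmZl cmZr cmDl !cmBr !cm_self (cm_anti (Splus n) (Sminus n)) PM'.
move: (Sz n) => Z; by apply/matrixP => r c; rewrite !mxE; field: i2.
Qed.
Lemma rho_rel12 n : cm (rho n (@Ordinal 3 1 isT)) (rho n (@Ordinal 3 2 isT)) = rho n (@Ordinal 3 0 isT).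
Proof.
rewrite /rho /= cmZl cmZr cmBl (cm_anti (Sz n) (Splus n)) (cm_anti (Sz n) (Sminus n)) SzP' SzM.
move: (Sz n) (Splus n) (Sminus n) => Z P M.
by apply/matrixP => r c; rewrite !mxE; field: i2.
Qed.
Lemma rho_rel20 n : cm (rho n (@Ordinal 3 2 isT)) (rho n (@Ordinal 3 0 isT)) = rho n (@Ordinal 3 1 isT).
Proof.
rewrite /rho /= cmZl cmZr cmDr SzP' SzM.
move: (Sz n) (Splus n) (Sminus n) => Z P M.
by apply/matrixP => r c; rewrite !mxE; field: i2.
Qed.


Notation i0 := (@Ordinal 3 0 isT).
Notation i1 := (@Ordinal 3 1 isT).
Notation i2' := (@Ordinal 3 2 isT).

Lemma sum3 (V : nmodType) (F : 'I_3 -> V) : \sum_(i < 3) F i = F i0 + F i1 + F i2'.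
Proof.
rewrite !big_ord_recr big_ord0 /= add0r.
by congr (F _ + F _ + F _); apply: val_inj.
Qed.

Lemma mxdiag_mul (p : nat) (p_ : 'I_p -> nat) (B B2 : forall i, 'M[C]_(p_ i)) :
  mxdiag B *m mxdiag B2 = mxdiag (fun i => B i *m B2 i).
Proof.
rewrite {1}/mxdiag mul_mxblock_mxdiag /mxdiag; apply: eq_mxblock => i j.
case: eqVneq => [<-|_]; last by rewrite mul0mx.
by rewrite !conform_mx_id.
Qed.

Lemma X_cm N a b c : (forall n, cm (rho n a) (rho n b) = rho n c) -> cm (X N a) (X N b) = X N c.
Proof.
move=> h; rewrite /cm /X !mxdiag_mul -mxdiagB; apply: eq_mxdiag => i; exact: h.
Qed.

Lemma comm_rel N (l : 'I_3) :
  \sum_k \sum_m (eps k m l *: (X N k *m X N m)) = X N l.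
Proof.
have r01 := X_cm N rho_rel01; have r12 := X_cm N rho_rel12; have r20 := X_cm N rho_rel20.
move: (X N) r01 r12 r20 => Xf r01 r12 r20.
rewrite sum3 !sum3.
case: l => [[|[|[|//]]] Hl]; rewrite /eps /= ?scale0r ?scale1r ?scaleN1r ?add0r ?addr0.
- have -> : Ordinal Hl = i0 by apply: val_inj. by rewrite -r12.
- have -> : Ordinal Hl = i1 by apply: val_inj. by rewrite -r20 /cm addrC.
- have -> : Ordinal Hl = i2' by apply: val_inj. by rewrite -r01.
Qed.

Lemma sum_delta (V : lmodType C) (k : 'I_3) (F : 'I_3 -> V) :
  \sum_m ((k == m)%:R *: F m) = F k.
Proof.
rewrite (bigD1 k) //= eqxx scale1r big1 ?addr0 // => m hm.
by rewrite eq_sym (negPf hm) scale0r.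
Qed.

Lemma DD N : Dirac N *m Dirac N = emb (- \sum_k (X N k *m X N k)) - Dirac N.
Proof.
have e1 : forall k m, (X N k *t sigma k) *m (X N m *t sigma m) =
   - ((k == m)%:R *: (X N k *m X N m *t 1%:M))
   - \sum_l ((eps k m l *: (X N k *m X N m)) *t sigma l).
  move=> k m; rewrite tensmx_mul sig_mul tensBr tensZr tens_sumr scaleNr.
  by congr (_ - _); apply: eq_bigr => l _; rewrite tensZr tensZl.
rewrite /Dirac mulmx_suml.
under eq_bigr do rewrite mulmx_sumr.
under eq_bigr do under eq_bigr do rewrite e1.
under eq_bigr do rewrite sumrB.
rewrite sumrB; congr (_ - _).
  rewrite /emb tensNl tens_suml -sumrN; apply: eq_bigr => k _.
  by rewrite sumrN (sum_delta k (fun m => X N k *m X N m *t 1%:M)).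
under eq_bigr do rewrite exchange_big.
rewrite exchange_big; apply: eq_bigr => l _.
rewrite -(comm_rel N l) tens_suml; apply: eq_bigr => k _.
by rewrite tens_suml.
Qed.


Section Vb.
Variables (p : nat) (p_ : 'I_p -> nat).
Definition Vb (i : 'I_p) : 'M[C]_(\sum_j p_ j, p_ i) :=
  @mxcol C p p_ (p_ i) (fun j => if j == i then conform_mx 0 (1%:M : 'M[C]_(p_ i)) else 0).

Lemma mxdiag_Vb (B : forall j, 'M[C]_(p_ j)) i : mxdiag B *m Vb i = Vb i *m B i.
Proof.
rewrite /Vb mul_mxdiag_mxcol mxcol_mul; apply: eq_mxcol => j.
case: eqVneq => [->|_]; last by rewrite mulmx0 mul0mx.
by rewrite !conform_mx_id mulmx1 mul1mx.
Qed.

Lemma Vb_mxdiag (B : forall j, 'M[C]_(p_ j)) i : (Vb i)^T *m mxdiag B = B i *m (Vb i)^T.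
Proof.
rewrite /Vb tr_mxcol mul_mxrow_mxdiag mul_mxrow; apply: eq_mxrow => j.
case: eqVneq => [->|_]; last by rewrite linear0 mul0mx mulmx0.
by rewrite !conform_mx_id trmx1 mulmx1 mul1mx.
Qed.

Lemma VbK i : (Vb i)^T *m Vb i = 1%:M.
Proof.
rewrite /Vb tr_mxcol mul_mxrow_mxcol (bigD1 i) //= eqxx conform_mx_id trmx1 mulmx1.
rewrite big1 ?addr0 // => j /negPf ->; by rewrite mulmx0.
Qed.
End Vb.

Definition V N (i : 'I_N.+1) : 'M[C]_(Kdim N, (i : nat).+1) :=
  @Vb (N.+1) (fun n : 'I_N.+1 => (n : nat).+1) i.

Lemma XV N k i : X N k *m V i = V i *m rho i k.
Proof. exact: mxdiag_Vb. Qed.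
Lemma VX N k i : (V i)^T *m X N k = rho i k *m (V i)^T.
Proof. exact: Vb_mxdiag. Qed.
Lemma VK N (i : 'I_N.+1) : (V i)^T *m V i = 1%:M.
Proof. exact: VbK. Qed.

Lemma rho0 k : rho 0 k = 0.
Proof.
apply/matrixP => r c; rewrite !ord1 /rho.
by case: k => [[|[|[|//]]] Hk] /=; rewrite !mxE /= ?mxE /=; field.
Qed.

Lemma tr_rho1 k : \tr (rho 1 k) = 0.
Proof.
rewrite /mxtrace; case: k => [[|[|[|//]]] Hk] /=;
 rewrite ?(mxE, summxE, big_ord_recr, big_ord0) /= ?mxE /= ?mulr1n ?sqrtC1; by field: i2.
Qed.

Lemma tr_rho11 k m : \tr (rho 1 k *m rho 1 m) = - (k == m)%:R / 2.
Proof.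
rewrite /mxtrace; case: k => [[|[|[|//]]] Hk]; case: m => [[|[|[|//]]] Hm] /=;
 rewrite ?(mxE, summxE, big_ord_recr, big_ord0) /= ?mxE /= ?mulr1n ?sqrtC1; by field: i2.
Qed.

Lemma trace_basis (M : 'M[C]_2) :
  \sum_(a < 2) ((delta_mx 0 a : 'M[C]_(1,2)) *m M *m (delta_mx a 0 : 'M[C]_(2,1))) = (\tr M)%:M.
Proof.
apply/matrixP => x y; rewrite !ord1 /mxtrace.
by rewrite ?(mxE, summxE, big_ord_recr, big_ord0) /= ?mxE /=; ring.
Qed.


Lemma sig_sq k : sigma k *m sigma k = - 1%:M.
Proof. case: k => [[|[|[|//]]] Hk]; crunch2. Qed.

Section Gen.
Variable N : nat.
Implicit Types a b : 'M[C]_(Kdim N).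
Lemma comm_emb a : comm (emb a) = \sum_k ((X N k *m a - a *m X N k) *t sigma k).
Proof.
rewrite /comm /Dirac /emb mulmx_suml mulmx_sumr -sumrB; apply: eq_bigr => k _.
by rewrite !tensmx_mul mulmx1 mul1mx tensBl.
Qed.
Lemma rep_pair a b : emb a *m comm (emb b) = \sum_k ((a *m (X N k *m b - b *m X N k)) *t sigma k).
Proof.
rewrite comm_emb mulmx_sumr; apply: eq_bigr => k _.
by rewrite /emb tensmx_mul mul1mx.
Qed.
Lemma drep_pair a b : comm (emb a) *m comm (emb b) =
  \sum_k \sum_m (((X N k *m a - a *m X N k) *m (X N m *m b - b *m X N m)) *t (sigma k *m sigma m)).
Proof.
rewrite !comm_emb mulmx_suml; apply: eq_bigr => k _.
rewrite mulmx_sumr; apply: eq_bigr => m _; by rewrite tensmx_mul.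
Qed.
End Gen.

Section Local.
Variable M : nat.
Notation N := M.+1.
Definition V0 : 'M[C]_(Kdim N, 1) := @V N ord0.
Definition V1 : 'M[C]_(Kdim N, 2) := @V N (@Ordinal M.+2 1 isT).

Lemma XV0 k : X N k *m V0 = 0.
Proof. by have := @XV N k ord0; rewrite rho0 mulmx0. Qed.
Lemma V0X k : V0^T *m X N k = 0.
Proof. by have := @VX N k ord0; rewrite rho0 mul0mx. Qed.
Lemma XV1 k : X N k *m V1 = V1 *m rho 1 k.
Proof. exact: (@XV N k (@Ordinal M.+2 1 isT)). Qed.
Lemma V1X k : V1^T *m X N k = rho 1 k *m V1^T.
Proof. exact: (@VX N k (@Ordinal M.+2 1 isT)). Qed.
Lemma V1K : V1^T *m V1 = 1%:M.
Proof. exact: (@VK N (@Ordinal M.+2 1 isT)). Qed.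
Lemma V0K : V0^T *m V0 = 1%:M.
Proof. exact: (@VK N ord0). Qed.

Section Pair.
Variables (R : 'M[C]_(1,2)) (Q : 'M[C]_(2,1)) (Y : 'M[C]_2).
Definition pa := V0 *m R *m V1^T.
Definition pb := V1 *m Y *m Q *m V0^T.
Lemma Xpa k : X N k *m pa = 0.
Proof. by rewrite /pa !mulmxA XV0 !mul0mx. Qed.
Lemma paX k : pa *m X N k = V0 *m (R *m rho 1 k) *m V1^T.
Proof. by rewrite /pa -!mulmxA V1X. Qed.
Lemma Xpb k : X N k *m pb = V1 *m (rho 1 k *m Y *m Q) *m V0^T.
Proof. by rewrite /pb !mulmxA XV1. Qed.
Lemma pbX k : pb *m X N k = 0.
Proof. by rewrite /pb -!mulmxA V0X !mulmx0. Qed.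
Lemma rep_pab : emb pa *m comm (emb pb) =
  \sum_k ((V0 *m (R *m rho 1 k *m Y *m Q) *m V0^T) *t sigma k).
Proof.
rewrite rep_pair; apply: eq_bigr => k _; rewrite pbX subr0 Xpb /pa.
by rewrite !mulmxA -[V0 *m R *m V1^T *m V1]mulmxA V1K mulmx1 ?mulmxA.
Qed.
Lemma drep_pab : comm (emb pa) *m comm (emb pb) =
  \sum_k \sum_m ((- (V0 *m (R *m rho 1 k *m rho 1 m *m Y *m Q) *m V0^T)) *t (sigma k *m sigma m)).
Proof.
rewrite drep_pair; apply: eq_bigr => k _; apply: eq_bigr => m _.
rewrite Xpa pbX sub0r subr0 paX Xpb mulNmx.
by rewrite !mulmxA -[V0 *m R *m rho 1 k *m V1^T *m V1]mulmxA V1K mulmx1 ?mulmxA.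
Qed.
End Pair.
End Local.

Section Loc2.
Variable M : nat.
Notation N := M.+1.
Definition P0 : 'M[C]_(Kdim N) := V0 M *m (V0 M)^T.
Definition rr (x : 'I_2) : 'M[C]_(1,2) := delta_mx 0 x.
Definition qq (x : 'I_2) : 'M[C]_(2,1) := delta_mx x 0.

Lemma V0_tr (G : 'M[C]_2) :
  \sum_(x < 2) (V0 M *m (rr x *m G *m qq x) *m (V0 M)^T) = \tr G *: P0.
Proof.
by rewrite -mulmx_suml -mulmx_sumr trace_basis mul_mx_scalar scalemxAl.
Qed.

Definition sj : seq (Apair N) :=
  [seq (pa M (rr x), pb M (qq x) 1%:M) | x <- index_enum 'I_2].

Lemma rep1_sj : rep1 sj = 0.
Proof.
rewrite /rep1 big_map.
under eq_bigr do rewrite rep_pab.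
rewrite exchange_big big1 // => k _.
rewrite -tens_suml.
under eq_bigr do rewrite mulmx1.
by rewrite V0_tr tr_rho1 scale0r tens0mx.
Qed.

Lemma drep_sj : drep sj = (-3/2) *: emb P0.
Proof.
rewrite /drep big_map.
under eq_bigr do rewrite drep_pab.
rewrite exchange_big /=.
under eq_bigr do rewrite exchange_big /=.
have e : forall k m : 'I_3, \sum_(x < 2) (- (V0 M *m (rr x *m rho 1 k *m rho 1 m *m 1%:M *m qq x) *m (V0 M)^T)
     *t (sigma k *m sigma m)) = ((k == m)%:R / 2) *: (P0 *t (sigma k *m sigma m)).
  move=> k m; rewrite -tens_suml sumrN.
  under eq_bigr do rewrite mulmx1 -(mulmxA (rr _)).
  by rewrite V0_tr tr_rho11 -scaleNr tensZl; congr (_ *: _); rewrite mulNr opprK.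
under eq_bigr do under eq_bigr do rewrite e.
rewrite (eq_bigr (fun k => (1/2) *: (P0 *t (sigma k *m sigma k)))); last first.
  move=> k _; rewrite (bigD1 k) //= eqxx big1 ?addr0 // => m /negPf.
  by rewrite eq_sym => ->; rewrite mul0r scale0r.
under eq_bigr do rewrite sig_sq tensNr scalerN.
rewrite sum3 /emb; move: (P0 *t _) => Z.
by apply/matrixP => r c; rewrite !mxE; field.
Qed.
End Loc2.


Section Loc3.
Variable M : nat.
Notation N := M.+1.

Definition so (l : 'I_3) : seq (Apair N) :=
  [seq (pa M (rr x), pb M (qq x) (rho 1 l)) | x <- index_enum 'I_2].

Lemma rep1_so l : rep1 (so l) = (-1/2) *: (P0 M *t sigma l).
Proof.
rewrite /rep1 big_map.
under eq_bigr do rewrite rep_pab.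
rewrite exchange_big /=.
rewrite (eq_bigr (fun k => (- (k == l)%:R / 2) *: (P0 M *t sigma k))); last first.
  move=> k _; rewrite -tens_suml.
  under eq_bigr do rewrite -(mulmxA (rr _)).
  by rewrite V0_tr tr_rho11 tensZl.
rewrite (bigD1 l) //= eqxx big1 ?addr0 // => k /negPf ->.
by rewrite oppr0 mul0r scale0r.
Qed.

Lemma J2_P0 : J2 (emb (P0 M)).
Proof.
have h : J2 ((-3/2) *: emb (P0 M)) by exists (sj M); rewrite rep1_sj drep_sj.
have := J2Z (-2/3) h; rewrite scalerA.
have -> : (-2/3) * (-3/2) = 1 :> C by field.
by rewrite scale1r.
Qed.

Lemma O1_P0 l : Omega1 (P0 M *t sigma l).
Proof.
have h : Omega1 ((-1/2) *: (P0 M *t sigma l)) by exists (so l); rewrite rep1_so.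
have := O1Z (-2) h; rewrite scalerA.
have -> : (-2) * (-1/2) = 1 :> C by field.
by rewrite scale1r.
Qed.

Lemma spread (Pr : op N -> Prop) (Y : op N) :
  Pr 0 -> (forall a b, Pr a -> Pr b -> Pr (a + b)) ->
  (forall c y, Pr y -> Pr (emb c *m y)) -> (forall y d, Pr y -> Pr (y *m emb d)) ->
  (forall c, emb c *m Y = Y *m emb c) ->
  Pr (emb (P0 M) *m Y) -> forall x, Pr (emb x *m Y).
Proof.
move=> H0 HD HL HR Hc HP x.
pose w (u : 'I_(Kdim N)) : 'M[C]_(Kdim N, 1) := delta_mx u 0.
have ex : x = \sum_u ((x *m w u *m (V0 M)^T) *m P0 M *m (V0 M *m (w u)^T)).
  rewrite -[x in LHS]mulmx1 mx1_sum_delta mulmx_sumr; apply: eq_bigr => u _.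
  rewrite /P0 !mulmxA -[x *m w u *m (V0 M)^T *m V0 M]mulmxA V0K mulmx1.
  rewrite -[x *m w u *m (V0 M)^T *m V0 M]mulmxA V0K mulmx1 -mulmxA.
  by rewrite /w trmx_delta mul_delta_mx.
rewrite ex emb_sum mulmx_suml; elim/big_ind: _ => // u _.
rewrite !embM -!mulmxA Hc !mulmxA; apply: HR; rewrite -mulmxA; exact: HL.
Qed.

Lemma J2_emb x : J2 (emb x : op N).
Proof.
rewrite -[emb x]mulmx1.
apply: (@spread (@J2 N) 1%:M (J2_0 N) (@J2D N) (@J2_lmul N) (@J2_rmul N)).
  by move=> c; rewrite mulmx1 mul1mx.
by rewrite mulmx1; exact: J2_P0.
Qed.

Lemma O1_e l : Omega1 (e N l).
Proof.
have ee : forall c, emb c *m e N l = c *t sigma l.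
  by move=> c; rewrite /emb /e tensmx_mul mulmx1 mul1mx.
have -> : e N l = emb 1%:M *m e N l by rewrite emb1 mul1mx.
apply: (@spread (@Omega1 N) (e N l) (O1_0 N) (@O1D N) (@O1_lmul N) (@O1_rmul N)).
  by move=> c; rewrite ee /emb /e tensmx_mul mulmx1 mul1mx.
by rewrite ee; exact: O1_P0.
Qed.
End Loc3.


Lemma sig_anti k l : sigma k *m sigma l + sigma l *m sigma k = (- 2 * (k == l)%:R) *: 1%:M.
Proof.
case: k => [[|[|[|//]]] Hk]; case: l => [[|[|[|//]]] Hl]; crunch2.
Qed.

Section T1.
Variable N : nat.
Definition t1 (A : 'M[C]_2) : op N := (1%:M : 'M[C]_(Kdim N)) *t A.
Lemma t1D A B : t1 (A + B) = t1 A + t1 B. Proof. exact: tensDr. Qed.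
Lemma t1Z c A : t1 (c *: A) = c *: t1 A. Proof. exact: tensZr. Qed.
Lemma t1N A : t1 (- A) = - t1 A. Proof. exact: tensNr. Qed.
Lemma t1B A B : t1 (A - B) = t1 A - t1 B. Proof. exact: tensBr. Qed.
Lemma t1_sum I (r : seq I) (P : pred I) (F : I -> 'M[C]_2) :
  t1 (\sum_(i <- r | P i) F i) = \sum_(i <- r | P i) t1 (F i).
Proof. exact: tens_sumr. Qed.
Lemma t1M A B : t1 A *m t1 B = t1 (A *m B).
Proof. by rewrite /t1 tensmx_mul mulmx1. Qed.
Lemma t1_scalar c : t1 (c%:M) = emb (c%:M).
Proof.
have h1 : (c%:M : 'M[C]_2) = c *: 1%:M by rewrite scalemx1.
have h2 : (c%:M : 'M[C]_(Kdim N)) = c *: 1%:M by rewrite scalemx1.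
by rewrite /t1 /emb h1 h2 tensZl tensZr.
Qed.
Lemma eE l : e N l = t1 (sigma l). Proof. by []. Qed.

Definition wm (a b : 'I_3) : 'M[C]_2 := (-1/2) *: \sum_l (eps a b l *: sigma l).
Definition fm (q : 'I_3) : 'M[C]_2 :=
  (1/2) *: \sum_(j < 3) \sum_(k < 3) (eps q j k *: (sigma j *m sigma k)).
Lemma omegaE a b : omega N a b = t1 (wm a b).
Proof.
rewrite /wm t1Z t1_sum /omega; congr (_ *: _); apply: eq_bigr => l _; by rewrite t1Z.
Qed.
Lemma fE q : f N q = t1 (fm q).
Proof.
rewrite /fm t1Z t1_sum /f; congr (_ *: _); apply: eq_bigr => j _.
rewrite t1_sum; apply: eq_bigr => k _; by rewrite t1Z /wedge -t1M.
Qed.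
End T1.

Definition Mc (j p : 'I_3) : 'M[C]_2 :=
  \sum_k (wm p k *m wm k j) + wm p j - (-1/4) *: \sum_q (eps j p q *: fm q).
Definition Md (j p : 'I_3) : 'M[C]_2 :=
  (-1/4) *: \sum_q (eps j p q *: fm q) - (1/4) *: (sigma p *m sigma j).



Lemma tr_sum I (r : seq I) (P : pred I) (F : I -> 'M[C]_2) :
  \tr (\sum_(i <- r | P i) F i) = \sum_(i <- r | P i) \tr (F i).
Proof. by elim/big_rec2: _ => [|i x y _ <-]; rewrite ?mxtrace0 ?mxtraceD. Qed.

Ltac crtr := rewrite /mxtrace ?(mxE, summxE, big_ord_recr, big_ord0) /= ?mxE /= /eps /=; ring: i2.

Lemma trs2 l n : \tr (sigma l *m sigma n) = -2 * (l == n)%:R.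
Proof. case: l => [[|[|[|//]]] Hl]; case: n => [[|[|[|//]]] Hn]; crtr. Qed.

Lemma trs3 l m n : \tr (sigma l *m sigma m *m sigma n) = 2 * eps l m n.
Proof.
case: l => [[|[|[|//]]] Hl]; case: m => [[|[|[|//]]] Hm]; case: n => [[|[|[|//]]] Hn]; crtr.
Qed.

Lemma mat2E (A : 'M[C]_2) : A = \matrix_(i, j) (if val i == 0%N then
   (if val j == 0%N then A 0 0 else A 0 1) else (if val j == 0%N then A 1 0 else A 1 1)).
Proof.
apply/matrixP; case=> [[|[|//]] ?]; case=> [[|[|//]] ?]; rewrite mxE /=;
  by congr (A _ _); apply: val_inj.
Qed.

Lemma decomp (A : 'M[C]_2) :
  A = (\tr A / 2) *: 1%:M - \sum_n ((\tr (A *m sigma n) / 2) *: sigma n).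
Proof.
have e := mat2E A; move: (A 0 0) (A 0 1) (A 1 0) (A 1 1) e => a b c d ->.
rewrite sum3 /mxtrace.
apply/matrixP; case=> [[|[|//]] ?]; case=> [[|[|//]] ?];
 rewrite ?(mxE, summxE, big_ord_recr, big_ord0) /= ?mxE /=; by field: i2.
Qed.


Lemma scalar_of_tr (A : 'M[C]_2) : (forall n, \tr (A *m sigma n) = 0) -> A = (\tr A / 2)%:M.
Proof.
move=> H; rewrite {1}(decomp A) big1 ?subr0 ?scalemx1 // => n _.
by rewrite H mul0r scale0r.
Qed.

Definition comb (c : 'I_3 -> C) : 'M[C]_2 := \sum_l (c l *: sigma l).

Lemma tr_comb1 c n : \tr (comb c *m sigma n) = \sum_l (c l * (-2 * (l == n)%:R)).
Proof.
rewrite /comb mulmx_suml tr_sum; apply: eq_bigr => l _.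
by rewrite -(scalemxAl (c l)) mxtraceZ trs2.
Qed.

Lemma tr_comb2 c d n : \tr (comb c *m comb d *m sigma n) =
  \sum_l \sum_m (c l * d m * (2 * eps l m n)).
Proof.
rewrite /comb !mulmx_suml tr_sum; apply: eq_bigr => l _.
rewrite -(scalemxAl (c l)) -(scalemxAl (c l)) mulmx_sumr mulmx_suml mxtraceZ tr_sum mulr_sumr.
apply: eq_bigr => m _.
by rewrite -(scalemxAr (d m)) -(scalemxAl (d m)) mxtraceZ trs3 mulrA.
Qed.

Lemma wmE a b : wm a b = (-1/2) *: comb (eps a b).
Proof. by []. Qed.

Lemma tr_fm q n : \tr (fm q *m sigma n) =
  (1/2) * \sum_a \sum_b (eps q a b * (2 * eps a b n)).
Proof.
rewrite /fm -(scalemxAl (1/2)) mxtraceZ mulmx_suml tr_sum; congr (_ * _).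
apply: eq_bigr => a _; rewrite mulmx_suml tr_sum; apply: eq_bigr => b _.
by rewrite -(scalemxAl (eps q a b)) mxtraceZ trs3.
Qed.

Lemma tr_wmwm a b c d n : \tr (wm a b *m wm c d *m sigma n) =
  (1/4) * \sum_l \sum_m (eps a b l * eps c d m * (2 * eps l m n)).
Proof.
rewrite wmE wmE -(scalemxAl (-1/2)) -(scalemxAr (-1/2)) scalerA.
rewrite -(scalemxAl ((-1/2) * (-1/2))) mxtraceZ tr_comb2.
by congr (_ * _); field.
Qed.

Lemma tr_wm a b n : \tr (wm a b *m sigma n) = (-1/2) * \sum_l (eps a b l * (-2 * (l == n)%:R)).
Proof. by rewrite wmE -(scalemxAl (-1/2)) mxtraceZ tr_comb1. Qed.

Lemma trB2 (A B : 'M[C]_2) : \tr (A - B) = \tr A - \tr B.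
Proof. by rewrite mxtraceD -scaleN1r mxtraceZ mulN1r. Qed.

Lemma Mc_tr j p n : \tr (Mc j p *m sigma n) =
  \sum_k ((1/4) * \sum_l \sum_m (eps p k l * eps k j m * (2 * eps l m n)))
  + (-1/2) * \sum_l (eps p j l * (-2 * (l == n)%:R))
  - (-1/4) * \sum_q (eps j p q * ((1/2) * \sum_a \sum_b (eps q a b * (2 * eps a b n)))).
Proof.
rewrite /Mc mulmxBl mulmxDl trB2 mxtraceD mulmx_suml tr_sum.
rewrite -(scalemxAl (-1/4)) mxtraceZ mulmx_suml tr_sum.
congr (_ + _ - _ * _).
- by apply: eq_bigr => k _; rewrite tr_wmwm.
- by rewrite tr_wm.
- by apply: eq_bigr => q _; rewrite -(scalemxAl (eps j p q)) mxtraceZ tr_fm.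
Qed.

Lemma Md_tr j p n : \tr (Md j p *m sigma n) =
  (-1/4) * \sum_q (eps j p q * ((1/2) * \sum_a \sum_b (eps q a b * (2 * eps a b n))))
  - (1/4) * (2 * eps p j n).
Proof.
rewrite /Md mulmxBl trB2 -(scalemxAl (-1/4)) -(scalemxAl (1/4)) !mxtraceZ trs3.
rewrite mulmx_suml tr_sum; congr (_ * _ - _).
by apply: eq_bigr => q _; rewrite -(scalemxAl (eps j p q)) mxtraceZ tr_fm.
Qed.


Lemma Mc_tr0 j p n : \tr (Mc j p *m sigma n) = 0.
Proof.
rewrite Mc_tr !sum3.
case: j => [[|[|[|//]]] Hj]; case: p => [[|[|[|//]]] Hp]; case: n => [[|[|[|//]]] Hn];
  rewrite /eps /=; by field.
Qed.

Lemma Md_tr0 j p n : \tr (Md j p *m sigma n) = 0.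
Proof.
rewrite Md_tr !sum3.
case: j => [[|[|[|//]]] Hj]; case: p => [[|[|[|//]]] Hp]; case: n => [[|[|[|//]]] Hn];
  rewrite /eps /=; by field.
Qed.


Section Final.
Variable M : nat.
Notation N := M.+1.

Lemma anti l : Dirac N *m e N l + e N l *m Dirac N = emb ((-2) *: X N l).
Proof.
rewrite /Dirac /e mulmx_suml mulmx_sumr -big_split /=.
rewrite (eq_bigr (fun k => emb (((-2) * (k == l)%:R) *: X N k))); last first.
  move=> k _; rewrite !tensmx_mul mulmx1 mul1mx -tensDr sig_anti tensZr.
  by rewrite /emb tensZl.
rewrite -emb_sum (bigD1 l) //= eqxx mulr1 big1 ?addr0 // => k /negPf ->.
by rewrite mulr0 scale0r.
Qed.

Lemma J2_anti (c : 'I_3 -> C) :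
  J2 (Dirac N *m (\sum_l (c l *: e N l)) + (\sum_l (c l *: e N l)) *m Dirac N).
Proof.
rewrite mulmx_sumr mulmx_suml -big_split /=; apply: J2_sum => l _.
rewrite -scalemxAr -scalemxAl -scalerDr anti; apply: J2Z; exact: J2_emb.
Qed.

Lemma omega_comb a b : omega N a b = (-1/2) *: \sum_l (eps a b l *: e N l).
Proof. by []. Qed.

Lemma O1_omega a b : Omega1 (omega N a b).
Proof.
rewrite omega_comb; apply: O1Z; apply: O1_sum => l _; apply: O1Z; exact: O1_e.
Qed.

Lemma d1_J2 x : Omega1 x -> J2 (d1 x - (Dirac N *m x + x *m Dirac N + x)).
Proof.
move=> /d1_spec [s [-> ->]].
rewrite (drep_formula s (DD N)).
set w := rep1 s; set y := emb _.
rewrite (_ : _ - _ = - y); first by apply: J2N; exact: J2_emb.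
by rewrite addrAC subrr add0r.
Qed.

Lemma d1_omega a b : J2 (d1 (omega N a b) - omega N a b).
Proof.
have h1 := d1_J2 (O1_omega a b).
have h2 : J2 (Dirac N *m omega N a b + omega N a b *m Dirac N).
  rewrite omega_comb -scalemxAr -scalemxAl -scalerDr; apply: J2Z; exact: J2_anti.
have := J2D h1 h2.
set u := d1 _; set v := Dirac N *m _ + _.
clearbody u v.
have e : u - omega N a b = u - (v + omega N a b) + v by rewrite opprD addrA addrAC subrK.
by rewrite e.
Qed.

Lemma d1_e l : J2 (d1 (e N l) - e N l).
Proof.
have h1 := d1_J2 (O1_e M l).
have h2 : J2 (Dirac N *m e N l + e N l *m Dirac N) by rewrite anti; exact: J2_emb.
have := J2D h1 h2.
set u := d1 _; set v := Dirac N *m _ + _.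
clearbody u v.
have e : u - e N l = u - (v + e N l) + v by rewrite opprD addrA addrAC subrK.
by rewrite e.
Qed.

Lemma S_d1 (x : op N) : Omega1 x -> Sspace (d1 x).
Proof. by move=> /d1_spec [s [_ ->]]; apply: S_drep. Qed.

Lemma S_e l : Sspace (e N l).
Proof.
have -> : e N l = d1 (e N l) - (d1 (e N l) - e N l) by rewrite opprB addrC subrK.
apply: SB; [exact: S_d1 (O1_e M l) | exact: S_J2 (d1_e l)].
Qed.

Lemma S_t1 A : Sspace (t1 N A).
Proof.
rewrite (decomp A) t1B t1Z t1_sum; apply: SB.
  by apply: SZ; rewrite t1_scalar; apply: S_J2; exact: J2_emb.
by apply: S_sum => n _; rewrite t1Z; apply: SZ; exact: S_e.
Qed.

Lemma J2_t1 A : (forall n, \tr (A *m sigma n) = 0) -> J2 (t1 N A).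
Proof. by move=> h; rewrite (scalar_of_tr h) t1_scalar; exact: J2_emb. Qed.
End Final.


Theorem proposition8p8 (N : nat) (hN : (1 <= N)%N) (j : 'I_3) :
  (forall p : 'I_3,
     eq2 (curv N j p) ((- 1 / 4) *: \sum_(q < 3) (eps j p q *: f N q))) /\
  (forall p : 'I_3,
     eq2 ((- 1 / 4) *: \sum_(q < 3) (eps j p q *: f N q))
         ((1 / 4) *: wedge (e N p) (e N j))).
Proof.
case: N hN => [//|M] _.
have eT : forall p, (- 1 / 4) *: \sum_(q < 3) (eps j p q *: f M.+1 q) =
    t1 M.+1 ((-1/4) *: \sum_q (eps j p q *: fm q)).
  by move=> p; rewrite t1Z t1_sum; congr (_ *: _); apply: eq_bigr => q _; rewrite t1Z fE.
split => p; rewrite eT.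
- have eC : curv M.+1 j p = t1 M.+1 (\sum_k (wm p k *m wm k j)) + d1 (omega M.+1 p j).
    rewrite /curv big_split /= t1_sum; congr (_ + _).
      by apply: eq_bigr => k _; rewrite /wedge /nabla !omegaE t1M.
    by rewrite -big_mkcond big_pred1_eq.
  rewrite eC; split; [|split].
  + apply: SD; [exact: S_t1 | exact: S_d1 (O1_omega M p j)].
  + exact: S_t1.
  + set W := \sum_k _; set T := (-1/4) *: _.
    have -> : t1 M.+1 W + d1 (omega M.+1 p j) - t1 M.+1 T =
       t1 M.+1 (Mc j p) + (d1 (omega M.+1 p j) - omega M.+1 p j).
      rewrite /Mc -/W -/T !t1B t1D omegaE.
      set a := t1 _ W; set b := d1 _; set c := t1 _ T; set d := t1 _ (wm p j).
      by clearbody a b c d; rewrite [RHS]addrC addrA (addrC a d) subrKA (addrC b a).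
    apply: J2D; [apply: J2_t1; exact: Mc_tr0 | exact: d1_omega].
- have eW : (1/4) *: wedge (e M.+1 p) (e M.+1 j) = t1 M.+1 ((1/4) *: (sigma p *m sigma j)).
    by rewrite t1Z /wedge !eE t1M.
  rewrite eW; split; [exact: S_t1 | split; [exact: S_t1 |]].
  rewrite -t1B; apply: J2_t1; exact: Md_tr0.
Qed.
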